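(* Let $P$ and $Q$ be probability measures on a measurable space $(\mathcal T,\mathscr F)$ with $P\ll Q$, let $M\in(0,\infty)$, and let $\omega(\tau)=\frac{dP}{dQ}(\tau)$ and $\check\omega(\tau)=\min\{M,\omega(\tau)\}$. Then for any $\alpha\in(0,\infty]$ and any $\beta\in[0,1]$, $$\mathbb E_{\tau\sim Q}[\check\omega(\tau)^\alpha]^{1/\alpha}\le M^{1-\beta}d_{\alpha\beta}(P\|Q)^{\beta-\frac1\alpha}.$$ Furthermore, for any $\beta\in[1,\infty]$, $$\mathbb E_{\tau\sim Q}[\omega(\tau)-\check\omega(\tau)]\le\left(\frac{d_\beta(P\|Q)}{M}\right)^{\beta-1}.$$
   Context: For $P\ll Q$ and $\gamma\in[0,\infty]$, the Rényi divergence is $D_\gamma(P\|Q)=\frac{1}{\gamma-1}\log\int(\frac{dP}{dQ})^\gamma dQ$ (with the limiting values at $\gamma=1$, where it equals the KL divergence, and at $\gamma=\infty$, where $D_\infty=\log\operatorname{ess\,sup}\frac{dP}{dQ}$), and the exponentiated Rényi divergence is $d_\gamma(P\|Q)=\exp[D_\gamma(P\|Q)]$. In particular $\mathbb E_Q[(\frac{dP}{dQ})^\gamma]=d_\gamma(P\|Q)^{\gamma-1}$. *)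

(* Defs.v *)
From HB Require Import structures.
From mathcomp Require Import all_boot all_order all_algebra.
From mathcomp Require Import all_classical all_reals all_analysis ess_sup_inf hoelder.
Set Implicit Arguments. Unset Strict Implicit. Unset Printing Implicit Defensive.
Import Order.TTheory GRing.Theory Num.Theory.
Import numFieldNormedType.Exports.
Local Open Scope classical_set_scope.
Local Open Scope ring_scope.
Local Open Scope ereal_scope.

Definition is_density d (T : measurableType d) (R : realType)
    (P Q : {measure set T -> \bar R}) (omega : T -> R) : Prop :=
  [/\ measurable_fun setT omega,
      (forall x, (0 <= omega x)%R) &
      forall A, measurable A -> P A = \int[Q]_(x in A) (omega x)%:E].

(** Exponentiated Renyi divergence d_g(P||Q) = exp D_g(P||Q), expressed via
    omega = dP/dQ, for g in [0, +oo] (limiting values at g = 0, 1, +oo). *)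
Definition renyi_exp d (T : measurableType d) (R : realType)
    (Q : {measure set T -> \bar R}) (omega : T -> R) (g : \bar R) : \bar R :=
  match g with
  | +oo => ess_sup Q (fun x => (omega x)%:E)
  | g'%:E =>
      if g' == 0%R then
        (* D_0 = - log Q(dP/dQ > 0) *)
        (fine (Q [set x | (0 < omega x)%R]))^-1%:E
      else if g' == 1%R then
        (* D_1 = KL(P||Q) = E_Q[omega log omega] *)
        expeR (\int[Q]_x (omega x * ln (omega x))%:E)
      else
        poweR (\int[Q]_x (powR (omega x) g')%:E) (g' - 1)^-1
  | -oo => 0
  end.

(** Power x^e of an extended nonnegative real x by an extended exponent
    e in [0, +oo]; for e = +oo the limit value (0 if x<1, 1 if x=1, +oo if x>1). *)
Definition epow (R : realType) (x e : \bar R) : \bar R :=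
  match e with
  | e'%:E => poweR x e'
  | +oo => if x < 1 then 0 else if x == 1 then 1 else +oo
  | -oo => 0
  end.

(* Main.v *)
Require Import Defs.
From HB Require Import structures.
From mathcomp Require Import all_boot all_order all_algebra.
From mathcomp Require Import all_classical all_reals all_analysis ess_sup_inf hoelder.
From mathcomp Require Import measurable_realfun.
From mathcomp Require Import ring lra.
Import Order.TTheory GRing.Theory Num.Theory.
Import numFieldNormedType.Exports.
Local Open Scope classical_set_scope.
Local Open Scope ring_scope.
Lemma key_real (R : realType) (M w a b : R) : 0 <= a -> a <= M -> a <= w ->
  0 <= b <= 1 -> a <= M `^ (1 - b) * w `^ b.
Proof.
move=> a0 aM aw /andP[b0 b1].
have [->|a0'] := eqVneq a 0; first by rewrite mulr_ge0 ?powR_ge0.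
have ha : a = a `^ (1 - b) * a `^ b.
  by rewrite -powRD ?subrK ?powRr1 //; apply/implyP.
rewrite {1}ha; apply: ler_pM; rewrite ?powR_ge0 //.
  by apply: ge0_ler_powR; rewrite ?nnegrE ?subr_ge0 //; apply: (le_trans a0).
by apply: ge0_ler_powR; rewrite ?nnegrE //; apply: (le_trans a0).
Qed.

Lemma key_realp (R : realType) (M w a b p : R) : 0 <= a -> a <= M -> a <= w ->
  0 <= b <= 1 -> 0 < p -> a `^ p <= M `^ ((1 - b) * p) * w `^ (b * p).
Proof.
move=> a0 aM aw hb p0.
have M0 : 0 <= M by apply: le_trans aM.
have w0 : 0 <= w by apply: le_trans aw.
rewrite !powRrM -powRM ?powR_ge0 //.
apply: ge0_ler_powR; rewrite ?nnegrE ?mulr_ge0 ?powR_ge0 //; first exact: ltW.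
exact: key_real.
Qed.

Lemma key_real2 (R : realType) (M w b : R) : 0 <= w -> 0 < M -> 1 < b ->
  w - Num.min M w <= w `^ b * M^-1 `^ (b - 1).
Proof.
move=> w0 M0 b1.
have [wM|Mw] := boolP (w <= M).
  by rewrite min_r // subrr mulr_ge0 ?powR_ge0.
rewrite -ltNge in Mw.
have M0' : 0 <= M by exact: ltW.
have Mw' : M <= w by exact: ltW.
have b1' : 0 <= b - 1 by rewrite subr_ge0; exact: ltW.
rewrite min_l //.
have w0' : 0 < w by apply: lt_trans Mw.
rewrite -(mulr_powRB1 w0 (lt_trans ltr01 b1)) -mulrA -powRM ?invr_ge0 //.
have h1 : w - M <= w by rewrite lerBlDr lerDl.
apply: (le_trans h1).
rewrite -{1}(mulr1 w) ler_pM2l //.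
rewrite -[X in X <= _](powRr0 (w * M^-1)); apply: ler_powR; last by [].
by rewrite ler_pdivlMr // mul1r.
Qed.

Lemma powR_invN (R : realType) (q e : R) : 0 <= q -> (q^-1 `^ (- e))%R = q `^ e.
Proof.
by move=> q0; rewrite -powR_inv1 // -powRrM mulN1r opprK.
Qed.

Local Open Scope ereal_scope.

Lemma lnorm_bound d (T : measurableType d) (R : realType) (Q : measure T R)
   (f h : T -> R) (a c : R) : (0 < a)%R -> (0 <= c)%R ->
   measurable_fun setT f -> measurable_fun setT h -> (forall x, 0 <= h x)%R ->
   (forall x, `|f x| `^ a <= c * h x)%R ->
   Lnorm Q a%:E (fun x => (f x)%:E) <= (c `^ a^-1)%:E * (\int[Q]_x (h x)%:E) `^ a^-1.
Proof.
move=> a0 c0 fm hm h0 fh.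
rewrite unlock /=.
rewrite -poweR_EFin -poweRM ?lee_fin ?integral_ge0 //; last by move=> x _; rewrite lee_fin.
have a0' : (0 <= a^-1)%R by rewrite invr_ge0; exact: ltW.
apply: gt0_ler_poweR => //.
- by rewrite in_itv /= leey andbT integral_ge0 // => x _; rewrite poweR_ge0.
- by rewrite in_itv /= leey andbT mule_ge0 ?integral_ge0 ?lee_fin // => x _; rewrite lee_fin.
rewrite -ge0_integralZl //; last by move=> x _; rewrite lee_fin.
  apply: ge0_le_integral => //.
  - apply/measurable_EFinP => /=.
    have -> : (fun x : T => (`|f x| `^ a)%R) = (@powR R ^~ a) \o ((fun r : R => `|r|%R) \o f) by [].
    apply: (measurableT_comp (f := @powR R ^~ a)) => //.
    apply: (measurableT_comp (f := fun r : R => `|r|%R)) => //; exact: normr_measurable.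
  - have -> : (fun x => c%:E * (h x)%:E) = EFin \o (fun x => c * h x)%R.
      by apply: funext => x; rewrite /= EFinM.
    apply/measurable_EFinP; exact: measurable_funM.
  - by move=> x _ /=; rewrite -EFinM lee_fin.
by apply/measurable_EFinP.
Qed.

Theorem lemma1 (d : measure_display) (T : measurableType d) (R : realType)
    (P Q : probability T R) (omega : T -> R) (M : R) :
  P `<< Q ->
  is_density P Q omega ->
  (0 < M)%R ->
  (forall (alpha : \bar R) (beta : R),
      0 < alpha -> (0 <= beta <= 1)%R ->
      Lnorm Q alpha (fun x => (Num.min M (omega x))%:E)
        <= (powR M (1 - beta))%:E *
           epow (renyi_exp Q omega (alpha * beta%:E))
                (match alpha with
                 | a%:E => (beta - a^-1)%:E
                 | _ => beta%:E end)) /\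
  (forall beta : \bar R, 1 <= beta ->
      \int[Q]_x (omega x - Num.min M (omega x))%:E
        <= epow (renyi_exp Q omega beta * (M^-1)%:E) (beta - 1)).
Proof.
move=> _ [om_meas om_ge0 Pdens] M0.
have M0' : (0 <= M)%R by exact: ltW.
have int1 : \int[Q]_x (omega x)%:E = 1.
  rewrite -Pdens //. exact: probability_setT.
have mm : measurable_fun setT (fun x => Num.min M (omega x)).
  exact: measurable_minr.
have m0 : forall x, (0 <= Num.min M (omega x))%R.
  by move=> x; rewrite le_min M0' om_ge0.
have mM : forall x, (Num.min M (omega x) <= M)%R by move=> x; rewrite ge_min lexx.
have mw : forall x, (Num.min M (omega x) <= omega x)%R by move=> x; rewrite ge_min lexx orbT.
have QT : Q setT = 1 := probability_setT Q.
split.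
- move=> [a| |] beta; rewrite ?lte_fin => a0 /andP[b0 b1] //.
  + have a0' : (a != 0)%R by rewrite gt_eqF.
    rewrite -EFinM.
    have [->|bn0] := eqVneq beta 0%R.
    * rewrite mulr0 /renyi_exp eqxx /epow.
      set A := [set x | (0 < omega x)%R].
      have Am : measurable A.
        have -> : A = omega @^-1` `]0%R, +oo[.
          by apply/seteqP; split => x /=; rewrite in_itv /= andbT.
        by rewrite -[_ @^-1` _]setTI; apply: om_meas => //; exact: measurable_itv.
      apply: le_trans (@lnorm_bound _ _ _ Q (fun x => Num.min M (omega x)) (\1_A) a (M `^ a) a0 _ mm _ _ _) _.
      - exact: powR_ge0.
      - exact: measurable_indic.
      - by move=> x; rewrite indicE; case: (_ \in _).
      - move=> x; rewrite indicE ger0_norm //; case: (boolP (x \in A)) => xA.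
          rewrite mulr1; apply: ge0_ler_powR; rewrite ?nnegrE //; exact: ltW.
        have -> : omega x = 0%R.
          apply/eqP; rewrite eq_le om_ge0 andbT leNgt; apply/negP => h.
          by apply: (negP xA); rewrite in_setE.
        by rewrite min_r // powR0 ?mulr0.
      rewrite integral_indic // setIT.
      set q := (X in _ * X `^ a^-1 <= _).
      have Qfin : q = (fine q)%:E by rewrite fineK // fin_num_measure.
      rewrite Qfin poweR_EFin -EFinM subr0 powRr1 // sub0r poweR_EFin powR_invN ?fine_ge0 ?measure_ge0 //.
      by rewrite -EFinM -powRrM mulfV // powRr1.
    * have abn0 : (a * beta == 0)%R = false by rewrite mulf_eq0 (negbTE a0') (negbTE bn0).
      apply: le_trans (@lnorm_bound _ _ _ Q (fun x => Num.min M (omega x)) (fun x => powR (omega x) (a * beta))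
         a (M `^ ((1 - beta) * a)) a0 _ mm _ _ _) _.
      - exact: powR_ge0.
      - have -> : (fun x : T => (omega x `^ (a * beta))%R) = (@powR R ^~ (a * beta)%R) \o omega by [].
        exact: measurableT_comp.
      - by move=> x; exact: powR_ge0.
      - move=> x; rewrite ger0_norm // (mulrC a beta).
        by apply: key_realp => //; rewrite b0 b1.
      rewrite -powRrM -mulrA mulfV // mulr1.
      rewrite /renyi_exp abn0.
      have [ab1|ab1] := eqVneq (a * beta)%R 1%R.
      - rewrite ab1.
        have -> : (fun x => ((omega x) `^ 1)%:E) = (fun x => (omega x)%:E).
          by apply: funext => x; rewrite powRr1.
        have e : (beta - a^-1 = 0)%R.
          by rewrite -[X in (_ - X)%R]mulr1 -ab1 mulKf // subrr.
        by rewrite int1 poweR1r /epow e poweRe0 !mule1.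
      - rewrite /epow -poweRrM.
        have e : ((a * beta - 1)^-1 * (beta - a^-1) = a^-1)%R.
          have ab1' : (a * beta - 1 != 0)%R by rewrite subr_eq0.
          field. by rewrite ab1' a0'.
        by rewrite e.
  + rewrite unlock /= QT lte01.
    have [->|bn0] := eqVneq beta 0%R.
    * rewrite /epow poweRe0 mule1 subr0 powRr1 //.
      by apply/ess_supP; apply: nearW => x /=; rewrite lee_fin ger0_norm.
    * have bp : (0 < beta)%R by rewrite lt0r bn0.
      rewrite gt0_mulye ?lte_fin // /renyi_exp /epow.
      apply/ess_supP.
      have := ess_sup_ge Q (fun x => (omega x)%:E).
      apply: filterS => x /=.
      case: (ess_sup Q _) => [r| |] Hx.
      - rewrite lee_fin in Hx.
        rewrite poweR_EFin -EFinM lee_fin ger0_norm //.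
        apply: key_real => //; last by rewrite b0 b1.
        exact: le_trans Hx.
      - rewrite poweRyr ?gt_eqF // muleC gt0_mulye ?leey // lte_fin powR_gt0 //.
      - by rewrite leeNy_eq in Hx.
- have im : measurable_fun setT (fun x => (omega x - Num.min M (omega x))%:E).
    by apply/measurable_EFinP; exact: measurable_funB.
  have ige0 : forall x, setT x -> 0 <= (omega x - Num.min M (omega x))%:E.
    by move=> x _; rewrite lee_fin subr_ge0.
  move=> [b| |] b1 //.
  + rewrite lee_fin in b1.
    rewrite -EFinB /epow.
    have [->|bn1] := eqVneq b 1%R.
    * rewrite subrr poweRe0 -int1.
      apply: ge0_le_integral => //.
      - by apply/measurable_EFinP.
      - by move=> x _; rewrite lee_fin lerBlDr lerDl.
    * have b1' : (1 < b)%R by rewrite lt_neqAle eq_sym bn1 b1.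
      have b0 : (0 < b)%R by apply: lt_trans b1'.
      rewrite /renyi_exp (gt_eqF b0) (negbTE bn1).
      have bm1 : (b - 1 != 0)%R by rewrite subr_eq0.
      rewrite poweRM ?poweR_ge0 ?lee_fin ?invr_ge0 //.
      rewrite -poweRrM mulVf // poweRe1 ?integral_ge0 //; last by move=> x _; rewrite lee_fin powR_ge0.
      rewrite poweR_EFin -ge0_integralZr //; last 3 first.
      - apply/measurable_EFinP.
        have -> : (fun x : T => (omega x `^ b)%R) = (@powR R ^~ b) \o omega by [].
        exact: measurableT_comp.
      - by move=> x _; rewrite lee_fin powR_ge0.
      - by rewrite lee_fin powR_ge0.
      apply: ge0_le_integral => //.
      - have -> : (fun x => (omega x `^ b)%:E * ((M^-1) `^ (b - 1))%:E) =
                  EFin \o (fun x => (omega x `^ b) * (M^-1) `^ (b - 1))%R.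
          by apply: funext => x; rewrite /= EFinM.
        apply/measurable_EFinP; apply: measurable_funM => //.
        have -> : (fun x : T => (omega x `^ b)%R) = (@powR R ^~ b) \o omega by [].
        exact: measurableT_comp.
      - by move=> x _; rewrite -EFinM lee_fin; apply: key_real2.
  + rewrite /renyi_exp /epow /=.
    set s := ess_sup Q _.
    have [sM|Ms] := boolP (s <= M%:E).
    * have -> : \int[Q]_x (omega x - Num.min M (omega x))%:E = 0.
        rewrite (@ae_eq_integral _ _ _ _ _ (cst 0)) ?integral0 //.
        have := ess_sup_ge Q (fun x => (omega x)%:E).
        apply: filterS => x /= Hx _.
        have wM : (omega x <= M)%R by rewrite -lee_fin (le_trans Hx).
        by rewrite min_r // subrr.
      by case: ifP => // _; case: ifP.
    * rewrite -ltNge in Ms.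
      have gt1 : 1 < s * (M^-1)%:E.
        move: Ms; case: s => [r| |] //= Ms.
        - by rewrite -EFinM lte_fin ltr_pdivlMr // mul1r -lte_fin.
        - by rewrite gt0_mulye ?lte_fin ?invr_gt0 // ltry.
      by rewrite ltNge (ltW gt1) /= (gt_eqF gt1) leey.
Qed.
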